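(* Let $m,n\geq 2$. If $S$ is a $\{2\}$-resolving set of the rook's graph $K_m\Box K_n$, then every quadruple of $K_m\Box K_n$ contains at least one element of $S$.
   Context: $K_m\Box K_n$ has vertices $av$ with $a\in V(K_m)$, $v\in V(K_n)$; distinct $av,bu$ are adjacent iff $a=b$ or $u=v$. A quadruple is a set $\{av,au,bv,bu\}$ with $a\neq b$ in $V(K_m)$ and $u\neq v$ in $V(K_n)$. $d$ is the shortest-path distance, $d(s,X)=\min_{x\in X}d(s,x)$, $\mathcal{D}_S(X)=(d(s_1,X),\dots,d(s_k,X))$ for $S=\{s_1,\dots,s_k\}$. $S$ is a $\{2\}$-resolving set if $\mathcal{D}_S(X)\neq\mathcal{D}_S(Y)$ for all distinct nonempty vertex sets $X,Y$ with $|X|,|Y|\leq 2$. *)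

(* Defs.v *)
From mathcomp Require Import all_boot.
Set Implicit Arguments. Unset Strict Implicit. Unset Printing Implicit Defensive.

(* Rook's graph K_m □ K_n: vertex (a, v) with a : 'I_m, v : 'I_n. *)
Definition rook_adj (m n : nat) : rel ('I_m * 'I_n) :=
  fun x y => (x != y) && ((x.1 == y.1) || (x.2 == y.2)).

Fixpoint within (m n : nat) (k : nat) (x y : 'I_m * 'I_n) : bool :=
  match k with
  | 0 => x == y
  | k'.+1 => within k' x y || [exists z, within k' x z && rook_adj z y]
  end.

(* shortest-path distance: least k with a walk of length <= k
   (the graph is connected, so such k < #|V| exists) *)
Definition rdist (m n : nat) (x y : 'I_m * 'I_n) : nat :=
  find (fun k => within k x y) (iota 0 #|{: 'I_m * 'I_n}|).

Definition rdist_set (m n : nat) (s : 'I_m * 'I_n) (X : {set 'I_m * 'I_n}) : nat :=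
  \big[minn/#|{: 'I_m * 'I_n}|]_(x in X) rdist s x.

Definition two_resolving (m n : nat) (S : {set 'I_m * 'I_n}) : Prop :=
  forall X Y : {set 'I_m * 'I_n},
    X != set0 -> Y != set0 -> #|X| <= 2 -> #|Y| <= 2 -> X != Y ->
    exists2 s, s \in S & rdist_set s X != rdist_set s Y.

Definition quadruple (m n : nat) (a b : 'I_m) (u v : 'I_n) : {set 'I_m * 'I_n} :=
  [set (a, v); (a, u); (b, v); (b, u)].

(* Main.v *)
Require Import Defs.
From HB Require Import structures.
From mathcomp Require Import all_boot.
Set Implicit Arguments. Unset Strict Implicit. Unset Printing Implicit Defensive.

HB.instance Definition _ := SemiGroup.isComLaw.Build nat minn minnA minnC.

Definition fd (m n : nat) (x y : 'I_m * 'I_n) : nat :=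
  if x == y then 0 else if (x.1 == y.1) || (x.2 == y.2) then 1 else 2.

Lemma fd_le2 m n (x y : 'I_m * 'I_n) : fd x y <= 2.
Proof. by rewrite /fd; case: ifP => //; case: ifP. Qed.

Lemma withinE m n k (x y : 'I_m * 'I_n) : within k x y = (fd x y <= k).
Proof.
elim: k x y => [|k IH] x y /=.
  by rewrite /fd; case: ifP => //; case: ifP.
rewrite IH.
have -> : [exists z, within k x z && rook_adj z y] =
          [exists z, (fd x z <= k) && rook_adj z y].
  apply: eq_existsb; move=> z; by rewrite IH.
apply/idP/idP.
  case/orP => [H|/existsP[z /andP[Hz Hzy]]]; first exact: leqW.
  case: k IH Hz => [|k] IH Hz; last exact: leq_trans (fd_le2 x y) _.
  move: Hz; rewrite {1}/fd; case: eqP => [xz _|_]; last by case: ifP.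
  by rewrite -xz in Hzy; move: Hzy; rewrite /rook_adj /fd => /andP[/negbTE -> ->].
case: (leqP (fd x y) k) => [//|lt H] /=.
have e : fd x y = k.+1 by apply/eqP; rewrite eqn_leq H lt.
case: k IH lt H e => [|[|k]] IH lt H e.
- apply/existsP; exists x; rewrite /fd eqxx /=.
  move: e; rewrite /fd /rook_adj; case: eqP => // _; case: ifP => //.
- apply/existsP; exists (x.1, y.2); rewrite /fd /rook_adj /= !eqxx /= orbT andbT.
  apply/andP; split; first by case: ifP.
  move: e; rewrite /fd; case: eqP => // _.
  case: (boolP (x.1 == y.1)) => //= h _.
  by apply/negP => /eqP E; rewrite -E /= eqxx in h.
- by have := fd_le2 x y; rewrite e.
Qed.

Lemma find_ge c i N : i <= c < i + N ->
  find (fun k => c <= k) (iota i N) = c - i.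
Proof.
elim: N i => [|N IH] i; first by rewrite addn0 => /andP[a b]; move: (leq_trans b a); rewrite ltnn.
move=> /andP[h1 h2] /=.
case: (leqP c i) => h.
  by apply/esym/eqP; rewrite subn_eq0.
rewrite IH; last by rewrite h addSnnS.
by rewrite subnS prednK // subn_gt0.
Qed.

Lemma rdistE m n (x y : 'I_m * 'I_n) : 2 <= m -> 2 <= n -> rdist x y = fd x y.
Proof.
move=> hm hn; rewrite /rdist (eq_find (fun k => withinE k x y)) find_ge ?subn0 //= add0n.
rewrite card_prod !card_ord.
apply: leq_ltn_trans (fd_le2 x y) _.
by apply: leq_trans (leq_mul hm hn).
Qed.

Lemma rdist_set2 m n (s p q : 'I_m * 'I_n) : 2 <= m -> 2 <= n -> p != q ->
  rdist_set s [set p; q] = minn (fd s p) (fd s q).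
Proof.
move=> hm hn pq; rewrite /rdist_set.
rewrite (eq_bigl (fun x => x \in [:: p; q])); last by move=> x; rewrite !inE.
rewrite -big_uniq /=; last by rewrite inE pq.
rewrite !big_cons big_nil !rdistE //.
have -> : minn (fd s q) #|{: 'I_m * 'I_n}| = fd s q.
  apply/minn_idPl; rewrite card_prod !card_ord.
  apply: ltnW; apply: leq_ltn_trans (fd_le2 s q) _; exact: leq_trans (leq_mul hm hn).
by [].
Qed.

Theorem mainTheorem10 (m n : nat) (S : {set 'I_m * 'I_n}) :
  2 <= m -> 2 <= n -> two_resolving S ->
  forall (a b : 'I_m) (u v : 'I_n), a != b -> u != v ->
    exists2 x, x \in quadruple a b u v & x \in S.
Proof.
move=> hm hn HS a b u v ab uv.
case: (boolP [exists x, (x \in quadruple a b u v) && (x \in S)]).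
  by move/existsP => [x /andP[h1 h2]]; exists x.
move=> /existsPn Hn; exfalso.
have p1 : (a, v) != (b, u) by rewrite xpair_eqE negb_and ab.
have p2 : (a, u) != (b, v) by rewrite xpair_eqE negb_and ab.
have h1 : [set (a, v); (b, u)] != set0.
  by apply/set0Pn; exists (a, v); rewrite !inE eqxx.
have h2 : [set (a, u); (b, v)] != set0.
  by apply/set0Pn; exists (a, u); rewrite !inE eqxx.
have h3 : #|[set (a, v); (b, u)]| <= 2 by rewrite cards2 p1.
have h4 : #|[set (a, u); (b, v)]| <= 2 by rewrite cards2 p2.
have h5 : [set (a, v); (b, u)] != [set (a, u); (b, v)].
  apply/negP => /eqP E.
  have : (a, v) \in [set (a, u); (b, v)] by rewrite -E !inE eqxx.
  by rewrite !inE !xpair_eqE eqxx (negbTE ab) /= eq_sym (negbTE uv).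
have [s sS] := HS _ _ h1 h2 h3 h4 h5.
rewrite !rdist_set2 //.
have := Hn s; rewrite sS andbT /quadruple !inE.
case: s {sS} => c w; rewrite /fd !xpair_eqE /=.
by case: (c == a); case: (c == b); case: (w == u); case: (w == v).
Qed.
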